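(* For any $\mathcal{H}\subseteq\{0,1\}^{\mathcal{X}}$ with $\operatorname{L}(\mathcal{H})=1$ and any time horizon $T$, there exists a deterministic online learner which, under apple tasting feedback, makes at most $1+2\sqrt{T}$ mistakes on any sequence $(x_1,y_1),\dots,(x_T,y_T)$ realizable by $\mathcal{H}$ (i.e. $y_t=h(x_t)$ for all $t$ for some $h\in\mathcal{H}$).
   Context: Apple tasting feedback: in each round the learner receives $x_t\in\mathcal{X}$, predicts $\hat y_t\in\{0,1\}$, and observes the true label $y_t$ only if $\hat y_t=1$; a mistake is a round with $\hat y_t\ne y_t$. The Littlestone dimension $\operatorname{L}(\mathcal{H})$ is the largest $d$ such that there is a complete binary tree of depth $d$ with internal nodes labeled by instances of $\mathcal{X}$ that is shattered by $\mathcal{H}$: for every root-to-leaf path $\sigma\in\{0,1\}^d$ (with $x_i$ the instance at the node reached by prefix $\sigma_1\dots\sigma_{i-1}$) some $h\in\mathcal{H}$ satisfies $h(x_i)=\sigma_i$ for all $i$. *)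

(* Defs.v *)
From Stdlib Require Import List Arith Reals.
Import ListNotations.

Definition hclass (X : Type) := (X -> bool) -> Prop.

(* A (complete) binary tree with internal nodes labeled by instances: the node
   reached by the prefix p (a list of booleans, root = []) is labeled tr p. *)
Definition ltree (X : Type) := list bool -> X.

Definition shatters {X : Type} (H : hclass X) (d : nat) (tr : ltree X) : Prop :=
  forall sigma : list bool, length sigma = d ->
    exists h, H h /\
      forall i, i < d -> h (tr (firstn i sigma)) = nth i sigma false.

Definition ldim_eq {X : Type} (H : hclass X) (d : nat) : Prop :=
  (exists tr : ltree X, shatters H d tr) /\
  (forall d' (tr : ltree X), shatters H d' tr -> d' <= d).

(* Apple-tasting feedback history: for each past round, the instance together
   with Some y if the learner predicted 1 (label revealed), None if it
   predicted 0 (label not revealed). *)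
Definition history (X : Type) := list (X * option bool).

Definition learner (X : Type) := history X -> X -> bool.

Fixpoint mistakes_from {X : Type} (A : learner X) (hist : history X)
    (s : list (X * bool)) : nat :=
  match s with
  | [] => 0
  | (x, y) :: s' =>
      let yh := A hist x in
      (if Bool.eqb yh y then 0 else 1) +
      mistakes_from A (hist ++ [(x, if yh then Some y else None)]) s'
  end.

Definition mistakes {X : Type} (A : learner X) (s : list (X * bool)) : nat :=
  mistakes_from A [] s.

Definition realizable {X : Type} (H : hclass X) (s : list (X * bool)) : Prop :=
  exists h, H h /\ forall p, In p s -> snd p = h (fst p).

(* Main.v *)
Require Import Defs.
From Stdlib Require Import List Arith Reals.
From Stdlib Require Import Lia Lra Psatz Classical ClassicalEpsilon FunctionalExtensionality.
Import ListNotations.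

Definition dec (P : Prop) : bool := if excluded_middle_informative P then true else false.
Lemma decT P : dec P = true <-> P.
Proof. unfold dec; destruct (excluded_middle_informative P); split; congruence || tauto. Qed.
Lemma decF P : dec P = false <-> ~ P.
Proof. unfold dec; destruct (excluded_middle_informative P); split; congruence || tauto. Qed.

Section Learn.
Variable X : Type.
Variable H : hclass X.
Variable k : nat.

Definition VS (hist : history X) (g : X -> bool) : Prop :=
  H g /\ forall x y, In (x, Some y) hist -> g x = y.

Definition V0triv (V : (X -> bool) -> Prop) (x : X) : Prop :=
  exists f0, forall g, V g -> g x = false -> g = f0.
Definition isCand (V : (X -> bool) -> Prop) x f : Prop := ~ V0triv V x /\ V f /\ f x = true.

Fixpoint psum (g : history X -> X * option bool -> nat) (acc l : history X) : nat :=
  match l with [] => 0 | e :: l' => g acc e + psum g (acc ++ [e]) l' end.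
Definition S g l := psum g [] l.

Definition cntg f (p : history X) (e : X * option bool) : nat :=
  match snd e with None => if dec (isCand (VS p) (fst e) f) then 1 else 0 | Some _ => 0 end.
Definition cnt f hist := S (cntg f) hist.

Definition Alg : learner X := fun hist x =>
  if dec (forall g, VS hist g -> g x = false) then false
  else if dec (V0triv (VS hist) x) then true
  else dec (exists f, isCand (VS hist) x f /\ k <= cnt f hist).

Lemma psum_snoc g acc l e : psum g acc (l ++ [e]) = psum g acc l + g (acc ++ l) e.
Proof.
  revert acc; induction l as [|a l IH]; intros acc; simpl.
  - rewrite app_nil_r; lia.
  - rewrite IH, <- app_assoc; simpl; lia.
Qed.

Lemma S_snoc g l e : S g (l ++ [e]) = S g l + g l e.
Proof. unfold S; rewrite psum_snoc; reflexivity. Qed.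

Lemma psum_le g1 g2 acc l : (forall p e, g1 p e <= g2 p e) -> psum g1 acc l <= psum g2 acc l.
Proof.
  intros Hg; revert acc; induction l as [|a l IH]; intros acc; simpl; auto.
  specialize (Hg acc a); specialize (IH (acc ++ [a])); lia.
Qed.

Lemma psum_const acc l : psum (fun _ _ => 1) acc l = length l.
Proof. revert acc; induction l; intros; simpl; auto. Qed.

Lemma psum_add g1 g2 acc l :
  psum (fun p e => g1 p e + g2 p e) acc l = psum g1 acc l + psum g2 acc l.
Proof. revert acc; induction l as [|a l IH]; intros acc; simpl; auto. rewrite IH; lia. Qed.

Lemma psum_ext g1 g2 acc l : (forall p e, g1 p e = g2 p e) -> psum g1 acc l = psum g2 acc l.
Proof. intros Hg; revert acc; induction l as [|a l IH]; intros acc; simpl; auto. Qed.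

Fixpoint sumL (L : list (X -> bool)) (F : (X -> bool) -> nat) : nat :=
  match L with [] => 0 | f :: L' => F f + sumL L' F end.

Lemma psum_sumL L acc l :
  sumL L (fun f => psum (cntg f) acc l) = psum (fun p e => sumL L (fun f => cntg f p e)) acc l.
Proof.
  induction L as [|f L IH]; simpl.
  - symmetry. induction l as [|a l IHl] in acc |- *; simpl; auto.
  - rewrite IH. rewrite <- psum_add. reflexivity.
Qed.

Lemma sumL_zero L F : (forall f, In f L -> F f = 0) -> sumL L F = 0.
Proof. induction L; simpl; intros; auto. rewrite H0, IHL; auto. Qed.

Lemma sumL_le1 L F : NoDup L -> (forall f, F f <= 1) ->
  (forall f g, In f L -> In g L -> F f <> 0 -> F g <> 0 -> f = g) -> sumL L F <= 1.
Proof.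
  induction L as [|a L IH]; simpl; intros ND H1 Hu; [lia|].
  inversion ND; subst.
  destruct (Nat.eq_dec (F a) 0) as [E|E].
  - rewrite E. apply IH; auto.
  - rewrite sumL_zero. specialize (H1 a); lia.
    intros f Hf. destruct (Nat.eq_dec (F f) 0) as [|Nf]; auto.
    exfalso. assert (f = a) by (apply Hu; simpl; auto). subst; tauto.
Qed.

Lemma sumL_ge L F : (forall f, In f L -> k <= F f) -> k * length L <= sumL L F.
Proof.
  induction L as [|a L IH]; simpl; intros Hf; [lia|].
  assert (k * length L <= sumL L F) by auto. specialize (Hf a (or_introl eq_refl)). nia.
Qed.

Lemma VS_snoc hist x o g : VS (hist ++ [(x, o)]) g <-> VS hist g /\ (forall y, o = Some y -> g x = y).
Proof.
  unfold VS; split.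
  - intros [Hg Hi]; repeat split; auto.
    + intros; apply Hi; apply in_or_app; auto.
    + intros y ->; apply Hi; apply in_or_app; simpl; auto.
  - intros [[Hg Hi] Ho]; split; auto.
    intros x' y Hin; apply in_app_or in Hin; destruct Hin as [Hin|[Hin|[]]]; auto.
    inversion Hin; subst; auto.
Qed.

Lemma Alg_spec hist x : Alg hist x = true <->
  ~ (forall g, VS hist g -> g x = false) /\
  (V0triv (VS hist) x \/ exists f, isCand (VS hist) x f /\ k <= cnt f hist).
Proof.
  unfold Alg.
  destruct (dec (forall g, VS hist g -> g x = false)) eqn:E1.
  - rewrite decT in E1. split; [discriminate| tauto].
  - rewrite decF in E1. destruct (dec (V0triv (VS hist) x)) eqn:E2.
    + rewrite decT in E2; split; auto.
    + rewrite decF in E2. rewrite decT. tauto.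
Qed.

Hypothesis Hd : forall d tr, shatters H d tr -> d <= 1.

Lemma cand_unique hist x f g : isCand (VS hist) x f -> isCand (VS hist) x g -> f = g.
Proof.
  intros [Hn [Vf Hfx]] [_ [Vg Hgx]].
  apply NNPP; intro Hfg.
  assert (exists y, f y <> g y) as [y Hy].
  { apply not_all_ex_not; intro A; apply Hfg; apply functional_extensionality; auto. }
  assert (exists g1, VS hist g1 /\ g1 x = false) as [g1 [V1 H1x]].
  { apply NNPP; intro N; apply Hn; exists (fun _ => false); intros g' Vg' Hg'.
    exfalso; apply N; eauto. }
  assert (exists g2, VS hist g2 /\ g2 x = false /\ g2 <> g1) as [g2 [V2 [H2x H21]]].
  { apply NNPP; intro N; apply Hn; exists g1; intros g' Vg' Hg'.
    apply NNPP; intro N'; apply N; eauto. }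
  assert (exists z, g1 z <> g2 z) as [z Hz].
  { apply not_all_ex_not; intro A; apply H21; apply functional_extensionality; auto. }
  pose (tr := fun p : list bool => match p with [] => x | false :: _ => z | true :: _ => y end).
  assert (Hs : shatters H 2 tr).
  { intros sigma Hl.
    destruct sigma as [|b0 [|b1 [|b2 sg]]]; simpl in Hl; try lia.
    destruct b0.
    - assert (exists h, (h = f \/ h = g) /\ h y = b1) as [h [Hh Hhy]].
      { destruct (Bool.bool_dec (f y) b1); [exists f; auto|].
        exists g; split; auto. destruct (f y), (g y), b1; congruence. }
      exists h; split.
      + destruct Hh; subst; [apply Vf|apply Vg].
      + intros i Hi. destruct i as [|[|i]]; simpl; try lia.
        * destruct Hh; subst; auto.
        * auto.
    - assert (exists h, (h = g1 \/ h = g2) /\ h z = b1) as [h [Hh Hhz]].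
      { destruct (Bool.bool_dec (g1 z) b1); [exists g1; auto|].
        exists g2; split; auto. destruct (g1 z), (g2 z), b1; congruence. }
      exists h; split.
      + destruct Hh; subst; [apply V1|apply V2].
      + intros i Hi. destruct i as [|[|i]]; simpl; try lia.
        * destruct Hh; subst; auto.
        * auto. }
  apply Hd in Hs; lia.
Qed.

Variable hs : X -> bool.
Hypothesis Hhs : H hs.

Inductive gen : history X -> Prop :=
| gen_nil : gen []
| gen_snoc : forall hist x, gen hist ->
    gen (hist ++ [(x, if Alg hist x then Some (hs x) else None)]).

Definition typeAg (p : history X) (e : X * option bool) : nat :=
  match snd e with None => if hs (fst e) then 1 else 0 | Some _ => 0 end.
Definition zg (p : history X) (e : X * option bool) : nat :=
  match snd e with Some false => if dec (V0triv (VS p) (fst e)) then 1 else 0 | _ => 0 end.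
Definition eg (p : history X) (e : X * option bool) : nat :=
  match snd e with Some false => if dec (V0triv (VS p) (fst e)) then 0 else 1 | _ => 0 end.
Definition Zg (p : history X) (e : X * option bool) : nat :=
  match snd e with None => if dec (exists f, isCand (VS p) (fst e) f) then 1 else 0 | Some _ => 0 end.
Definition misg (p : history X) (e : X * option bool) : nat :=
  match snd e with None => if hs (fst e) then 1 else 0 | Some y => if y then 0 else 1 end.

Lemma typeA_some p x y : typeAg p (x, Some y) = 0. Proof. reflexivity. Qed.
Lemma typeA_none p x : typeAg p (x, None) = if hs x then 1 else 0. Proof. reflexivity. Qed.
Lemma zg_true p x : zg p (x, Some true) = 0. Proof. reflexivity. Qed.
Lemma zg_false p x : zg p (x, Some false) = if dec (V0triv (VS p) x) then 1 else 0. Proof. reflexivity. Qed.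
Lemma zg_none p x : zg p (x, None) = 0. Proof. reflexivity. Qed.
Lemma eg_true p x : eg p (x, Some true) = 0. Proof. reflexivity. Qed.
Lemma eg_false p x : eg p (x, Some false) = if dec (V0triv (VS p) x) then 0 else 1. Proof. reflexivity. Qed.
Lemma eg_none p x : eg p (x, None) = 0. Proof. reflexivity. Qed.
Lemma cntg_some f p x y : cntg f p (x, Some y) = 0. Proof. reflexivity. Qed.
Lemma cntg_none f p x : cntg f p (x, None) = if dec (isCand (VS p) x f) then 1 else 0. Proof. reflexivity. Qed.

Lemma cnt_snoc f0 l e : cnt f0 (l ++ [e]) = cnt f0 l + cntg f0 l e.
Proof. unfold cnt; apply S_snoc. Qed.

Lemma inv hist : gen hist ->
  VS hist hs /\ cnt hs hist = S typeAg hist /\ S typeAg hist <= k /\ S zg hist <= 1 /\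
  (S zg hist = 1 -> forall g, VS hist g -> g = hs) /\
  exists L, NoDup L /\ ~ In hs L /\ length L = S eg hist /\
    (forall f, In f L -> k <= cnt f hist /\ ~ VS hist f).
Proof.
  induction 1 as [|hist x G IH].
  - refine (conj _ (conj _ (conj _ (conj _ (conj _ _))))).
    + split; [exact Hhs| intros ? ? []].
    + reflexivity.
    + unfold S; simpl; lia.
    + unfold S; simpl; lia.
    + unfold S; simpl; discriminate.
    + exists []; simpl; split; [constructor|]; split; [tauto|]; split; [reflexivity| tauto].
  - destruct IH as [Vh [Ec [Ak [Z1 [Zall [L [ND [NL [EL FL]]]]]]]]].
    destruct (Alg hist x) eqn:EA.
    + pose proof (proj1 (Alg_spec hist x) EA) as [Nall Hor].
      assert (VSn : forall g, VS (hist ++ [(x, Some (hs x))]) g <-> VS hist g /\ g x = hs x).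
      { intros g; rewrite VS_snoc; split; [intros [A B]; split; auto
          | intros [A B]; split; auto; intros y Hy; inversion Hy; subst; auto]. }
      rewrite !S_snoc, cnt_snoc.
      rewrite typeA_some, cntg_some.
      destruct (hs x) eqn:Ex.
      * rewrite zg_true, eg_true.
        refine (conj _ (conj _ (conj _ (conj _ (conj _ _))))).
        -- apply VSn; auto.
        -- lia.
        -- lia.
        -- lia.
        -- intros Z g Vg; apply Zall; [lia|]. apply VSn in Vg; tauto.
        -- exists L; repeat split; auto; [lia| |].
           ++ rewrite cnt_snoc. destruct (FL f H0); lia.
           ++ intros Vf; apply VSn in Vf; apply (FL f H0); tauto.
      * assert (Z0 : S zg hist = 0).
        { destruct (Nat.eq_dec (S zg hist) 0) as [|Zn]; auto. exfalso. apply Nall.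
          intros g Vg. rewrite (Zall ltac:(lia) g Vg). auto. }
        rewrite zg_false, eg_false.
        destruct (classic (V0triv (VS hist) x)) as [Tr|NTr].
        -- rewrite (proj2 (decT _) Tr).
           refine (conj _ (conj _ (conj _ (conj _ (conj _ _))))).
           ++ apply VSn; auto.
           ++ lia.
           ++ lia.
           ++ lia.
           ++ intros _ g Vg. destruct Tr as [f0 Hf0].
              apply VSn in Vg. destruct Vg as [Vg Vgx].
              rewrite (Hf0 g Vg Vgx), (Hf0 hs Vh Ex); reflexivity.
           ++ exists L; repeat split; auto; [lia| |].
              ** rewrite cnt_snoc. destruct (FL f H0); lia.
              ** intros Vf; apply VSn in Vf; apply (FL f H0); tauto.
        -- rewrite (proj2 (decF _) NTr).
           destruct Hor as [|[f [Cf Kf]]]; [contradiction|].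
           refine (conj _ (conj _ (conj _ (conj _ (conj _ _))))).
           ++ apply VSn; auto.
           ++ lia.
           ++ lia.
           ++ lia.
           ++ intros; lia.
           ++ destruct Cf as [_ [Vf Ff]].
              exists (f :: L); repeat split.
              ** constructor; auto. intro Hin. apply (FL f Hin); auto.
              ** intros [E|E]; [subst; congruence | auto].
              ** simpl; lia.
              ** destruct H0 as [E|E].
                 --- subst f0. rewrite cnt_snoc; lia.
                 --- rewrite cnt_snoc. destruct (FL f0 E); lia.
              ** intros Vg. destruct H0 as [E|E].
                 --- subst f0. apply VSn in Vg. destruct Vg; congruence.
                 --- apply VSn in Vg; apply (FL f0 E); tauto.
    + assert (VSn : forall g, VS (hist ++ [(x, None)]) g <-> VS hist g).
      { intros g; rewrite VS_snoc; split; [tauto| intros A; split; auto; discriminate]. }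
      assert (NA : ~ ((~ forall g, VS hist g -> g x = false) /\
        (V0triv (VS hist) x \/ exists f, isCand (VS hist) x f /\ k <= cnt f hist))).
      { intro A; apply Alg_spec in A; congruence. }
      rewrite !S_snoc, cnt_snoc.
      rewrite zg_none, eg_none, typeA_none, cntg_none.
      refine (conj _ (conj _ (conj _ (conj _ (conj _ _))))).
      * apply VSn; auto.
      * destruct (hs x) eqn:Ex.
        -- assert (Nall : ~ forall g, VS hist g -> g x = false).
           { intro A; specialize (A hs Vh); congruence. }
           assert (C : isCand (VS hist) x hs).
           { split; [|split; auto]. intro T; apply NA; split; auto. }
           rewrite (proj2 (decT _) C); lia.
        -- assert (C : ~ isCand (VS hist) x hs).
           { intros [_ [_ C]]; congruence. }
           rewrite (proj2 (decF _) C); lia.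
      * destruct (hs x) eqn:Ex; [|lia].
        assert (Nall : ~ forall g, VS hist g -> g x = false).
        { intro A; specialize (A hs Vh); congruence. }
        assert (C : isCand (VS hist) x hs).
        { split; [|split; auto]. intro T; apply NA; split; auto. }
        assert (~ k <= cnt hs hist) by (intro Kc; apply NA; split; eauto).
        lia.
      * lia.
      * intros Z g Vg; apply Zall; [lia|]. apply VSn in Vg; tauto.
      * exists L; repeat split; auto; [lia| |].
        -- rewrite cnt_snoc. destruct (FL f H0); lia.
        -- intros Vf; apply VSn in Vf; apply (FL f H0); tauto.
Qed.

Lemma run s hist : gen hist -> (forall p, In p s -> snd p = hs (fst p)) ->
  exists F, gen F /\ length F = length hist + length s /\
    S misg hist + mistakes_from Alg hist s = S misg F.
Proof.
  revert hist; induction s as [|[x y] s IH]; intros hist G R.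
  - exists hist; simpl; repeat split; auto; lia.
  - simpl. assert (y = hs x) by (apply (R (x,y)); simpl; auto). subst y.
    destruct (IH (hist ++ [(x, if Alg hist x then Some (hs x) else None)])) as [F [GF [LF MF]]].
    + constructor; auto.
    + intros; apply R; simpl; auto.
    + exists F; split; auto. split.
      * rewrite LF, length_app; simpl; lia.
      * rewrite <- MF, S_snoc. destruct (Alg hist x); cbv [misg snd fst]; destruct (hs x); simpl; lia.
Qed.

Lemma sumbound L F : NoDup L -> sumL L (fun f => cnt f F) <= S Zg F.
Proof.
  intros ND. unfold cnt, S. rewrite psum_sumL. apply psum_le. intros p [x o].
  destruct o as [b|].
  - rewrite sumL_zero; [lia|]. intros; reflexivity.
  - unfold Zg; simpl.
    destruct (classic (exists f, isCand (VS p) x f)) as [Ex|NEx].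
    + rewrite (proj2 (decT _) Ex). apply sumL_le1; auto.
      * intros f; unfold cntg; simpl; repeat match goal with |- context [dec ?P] => destruct (dec P) end; lia.
      * intros f g _ _ Hf Hg. unfold cntg in Hf, Hg; simpl in *.
        destruct (dec (isCand (VS p) x f)) eqn:E1; [|congruence].
        destruct (dec (isCand (VS p) x g)) eqn:E2; [|congruence].
        rewrite decT in E1, E2. apply (cand_unique p x); auto.
    + rewrite (proj2 (decF _) NEx). rewrite sumL_zero; auto.
      intros f _. unfold cntg; simpl. destruct (dec (isCand (VS p) x f)) eqn:E; auto.
      rewrite decT in E. exfalso; eauto.
Qed.

Lemma ZEbound F : S Zg F + S eg F <= length F.
Proof.
  unfold S; rewrite <- psum_add, <- (psum_const [] F). apply psum_le.
  intros p [x [[|]|]]; unfold Zg, eg; simpl; repeat match goal with |- context [dec ?P] => destruct (dec P) end; lia.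
Qed.

Lemma misdec F : S misg F = S typeAg F + S zg F + S eg F.
Proof.
  unfold S; rewrite <- !psum_add; apply psum_ext.
  intros p [x [[|]|]]; unfold misg, typeAg, zg, eg; simpl; destruct (hs x); repeat match goal with |- context [dec ?P] => destruct (dec P) end; lia.
Qed.

End Learn.

Lemma real_bound T n : (Nat.sqrt T + 1) * n <= Nat.sqrt T * Nat.sqrt T + T ->
  (INR n <= 2 * sqrt (INR T))%R.
Proof.
  intros Hn. destruct (Nat.sqrt_spec T (Nat.le_0_l T)) as [H1 H2].
  set (kk := Nat.sqrt T) in *.
  apply le_INR in Hn. rewrite mult_INR, plus_INR, plus_INR, mult_INR in Hn.
  apply le_INR in H1. rewrite mult_INR in H1.
  apply lt_INR in H2. rewrite mult_INR, S_INR in H2.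
  replace (INR 1) with 1%R in Hn by reflexivity.
  pose proof (pos_INR kk) as Pk. pose proof (pos_INR T) as PT. pose proof (pos_INR n) as Pn.
  pose proof (sqrt_sqrt (INR T) PT) as Er. pose proof (sqrt_pos (INR T)) as Pr.
  set (r := sqrt (INR T)) in *.
  assert (A1 : (INR kk <= r)%R).
  { destruct (Rle_or_lt (INR kk) r) as [|L]; auto. nra. }
  assert (A2 : (r < INR kk + 1)%R).
  { destruct (Rle_or_lt (INR kk + 1) r) as [L|]; auto. nra. }
  assert (A3 : ((r - INR kk) * (r - INR kk) <= r - INR kk)%R) by nra.
  assert (A4 : ((INR kk + 1) * INR n <= (INR kk + 1) * (2 * r))%R) by nra.
  apply Rmult_le_reg_l with (INR kk + 1)%R; [lra| exact A4].
Qed.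

Theorem theorem5 (X : Type) (H : hclass X) :
  ldim_eq H 1 ->
  forall T : nat, exists A : learner X,
    forall s : list (X * bool), length s = T -> realizable H s ->
      (INR (mistakes A s) <= 1 + 2 * sqrt (INR T))%R.
Proof.
  intros [_ Hd] T. set (k := Nat.sqrt T). exists (Alg X H k).
  intros s Hlen [hs [Hhs Hreal]].
  destruct (run X H k hs s [] (gen_nil X H k hs) Hreal) as [F [GF [LF MF]]].
  destruct (inv X H k hs Hhs F GF) as [_ [Ec [Ak [Z1 [_ [L [ND [NL [EL FL]]]]]]]]].
  assert (SB := sumbound X H Hd (hs :: L) F (NoDup_cons _ NL ND)).
  simpl in SB.
  assert (SL := sumL_ge X k L (fun f => cnt X H f F) (fun f Hf => proj1 (FL f Hf))).
  pose proof (ZEbound X H F) as ZE.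
  pose proof (misdec X H hs F) as MD.
  unfold mistakes.
  change (S X (misg X hs) []) with 0 in MF. simpl in MF.
  rewrite MF, MD.
  simpl in LF. rewrite Hlen in LF.
  assert (Hab : (k + 1) * (S X (typeAg X hs) F + S X (eg X H) F) <= k * k + T) by nia.
  apply real_bound in Hab. fold k in Hab.
  rewrite !plus_INR; rewrite plus_INR in Hab.
  assert (INR (S X (zg X H) F) <= 1)%R.
  { replace 1%R with (INR 1) by reflexivity. apply le_INR; lia. }
  lra.
Qed.
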